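(* Let $A,B\in M_\ell(F)$ commute, let $Q=\mathrm{CSS}(H_X,H_Z)$ with $H_X=(A\ \ B)$, $H_Z=(B^T\ \ -A^T)$ be the two-block code, and fix idempotents $E_A,F_A$ associated with $A$ and $E_B,F_B$ associated with $B$. Define $$H_X^{(L)}=\begin{pmatrix}A&B\\0&I-E_A\end{pmatrix},\qquad H_X^{(R)}=\begin{pmatrix}A&B\\ I-E_B&0\end{pmatrix},$$ $Q'_\mu=\mathrm{CSS}(H_X^{(\mu)},H_Z)$ for $\mu\in\{L,R\}$; $Q''_L=\mathrm{CSS}(A,(H_Z)_L)$ with $(H_Z)_L=(B(I-F_A))^T$ and $Q''_R=\mathrm{CSS}(B,(H_Z)_R)$ with $(H_Z)_R=(A(I-F_B))^T$ (all of these are stabilizer CSS codes, i.e., the orthogonality condition holds); and classical codes $C_L=\{u\in F^\ell: Au=0,\ E_Bu=0\}$ and $C_R=\{u\in F^\ell: Bu=0,\ E_Au=0\}$ (the codes with parity-check matrices $\binom{A}{E_B}$ and $\binom{B}{E_A}$). Then for each $\mu\in\{L,R\}$, $$d_Z(Q)\le d_Z(Q'_\mu)\le d_Z(Q''_\mu)\le d(C_\mu).$$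
   Context: $F=\mathbb F_q$ is a finite field. For a matrix $H$ with $n$ columns, $C_H$ is its row space and $C_H^\perp$ its orthogonal complement in $F^n$. For $H_X,H_Z$ with $H_XH_Z^T=0$, $\mathrm{CSS}(H_X,H_Z)$ has $Z$-distance $d_Z=\min\{\mathrm{wgt}(c):c\in C_{H_X}^\perp\setminus C_{H_Z}\}$, where $\mathrm{wgt}$ is the Hamming weight and the minimum of the empty set is $\infty$. For a classical linear code $C$, $d(C)$ is the minimum weight of a nonzero codeword ($\infty$ if $C=\{0\}$). Idempotents associated with a matrix $A$: any $E_A,F_A$ with $E_A^2=E_A$, $F_A^2=F_A$, $\mathrm{rank}E_A=\mathrm{rank}F_A=\mathrm{rank}A$, $E_AA=AF_A=A$; similarly $E_B,F_B$ for $B$. *)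

(* Defs.v *)
From HB Require Import structures.
From mathcomp Require Import all_boot all_order all_algebra.
Set Implicit Arguments. Unset Strict Implicit. Unset Printing Implicit Defensive.
Import GRing.Theory.
Local Open Scope ring_scope.

(* Extended naturals: None = infinity. *)
Definition enat := option nat.
Definition ele (a b : enat) : bool :=
  match a, b with
  | _, None => true
  | None, Some _ => false
  | Some x, Some y => (x <= y)%N
  end.

Section Codes.
Variable F : finFieldType.

Definition wgt n (c : 'rV[F]_n) : nat := #|[set i | c 0 i != 0]|.

Definition in_perp m n (H : 'M[F]_(m, n)) (c : 'rV[F]_n) : bool :=
  H *m c^T == 0.

(* minimum of wgt over vectors satisfying P; None (infinity) if there are none.
   The default n of the big minn is never reached when the set is nonempty,
   since every weight is <= n. *)
Definition min_wgt n (P : pred 'rV[F]_n) : enat :=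
  if [exists c, P c] then Some (\big[minn/n]_(c | P c) wgt c) else None.

(* Z-distance of CSS(HX, HZ): min weight of c in C_{HX}^perp \ C_{HZ} *)
Definition dZ mx mz n (HX : 'M[F]_(mx, n)) (HZ : 'M[F]_(mz, n)) : enat :=
  min_wgt (fun c => in_perp HX c && ~~ (c <= HZ)%MS).

Definition dcode m n (H : 'M[F]_(m, n)) : enat :=
  min_wgt (fun c => in_perp H c && (c != 0)).

Definition assoc_idem l (A E Fm : 'M[F]_l) : Prop :=
  [/\ E *m E = E, Fm *m Fm = Fm, \rank E = \rank A & \rank Fm = \rank A]
  /\ (E *m A = A /\ A *m Fm = A).
End Codes.

(* Main.v *)
Require Import Defs.
From HB Require Import structures.
From mathcomp Require Import all_boot all_order all_algebra.
Import GRing.Theory.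
Local Open Scope ring_scope.
Set Implicit Arguments. Unset Strict Implicit.

Lemma bigmin_le_seq (I : eqType) r (P : pred I) (G : I -> nat) m i :
  i \in r -> P i -> (\big[minn/m]_(j <- r | P j) G j <= G i)%N.
Proof.
elim: r => // a r IH; rewrite in_cons big_cons; case/orP => [/eqP->|ir] Pi.
  by rewrite Pi geq_minl.
by case: ifP => _; [rewrite geq_min IH // orbT | exact: IH].
Qed.

Lemma bigmin_le (I : finType) (P : pred I) (G : I -> nat) m i :
  P i -> (\big[minn/m]_(j | P j) G j <= G i)%N.
Proof. by move=> Pi; apply: bigmin_le_seq => //; rewrite mem_index_enum. Qed.

Lemma bigmin_lb (I : finType) (P : pred I) (G : I -> nat) m x :
  (x <= m)%N -> (forall i, P i -> x <= G i)%N -> (x <= \big[minn/m]_(j | P j) G j)%N.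
Proof.
move=> xm H; apply: (big_ind (fun y => x <= y)%N) => // a b; rewrite leq_min => -> ->.
done.
Qed.

Lemma wgt_le (F : finFieldType) n (c : 'rV[F]_n) : (wgt c <= n)%N.
Proof. by rewrite /wgt (leq_trans (max_card _)) // card_ord. Qed.

Lemma min_wgt_map (F : finFieldType) n n' (P : pred 'rV[F]_n) (Q : pred 'rV[F]_n')
  (f : 'rV[F]_n -> 'rV[F]_n') :
  (forall c, P c -> Q (f c) /\ (wgt (f c) <= wgt c)%N) -> ele (min_wgt Q) (min_wgt P).
Proof.
move=> H; rewrite /min_wgt.
case: (boolP [exists c, P c]) => [/existsP[c0 Pc0]|_]; last by case: ifP.
have EQ : [exists c, Q c] by apply/existsP; exists (f c0); case: (H _ Pc0).
rewrite EQ /=; apply: bigmin_lb.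
  case: (H _ Pc0) => Qf wf.
  by rewrite (leq_trans (bigmin_le _ _ Qf)) // (leq_trans wf) // wgt_le.
move=> c Pc; case: (H _ Pc) => Qf wf.
exact: leq_trans (bigmin_le _ _ Qf) wf.
Qed.

Lemma wgt_row_l (F : finFieldType) n m (c : 'rV[F]_n) :
  (wgt (row_mx c (0 : 'rV[F]_m)) <= wgt c)%N.
Proof.
rewrite /wgt; apply: (leq_trans _ (leq_imset_card (@lshift n m) _)).
apply: subset_leq_card; apply/subsetP => i; rewrite inE.
case: (splitP i) => j ij.
  have -> : i = lshift m j by apply/val_inj.
  by rewrite row_mxEl => nz; apply: imset_f; rewrite inE.
have -> : i = rshift n j by apply/val_inj.
by rewrite row_mxEr mxE eqxx.
Qed.

Lemma wgt_row_r (F : finFieldType) n m (c : 'rV[F]_n) :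
  (wgt (row_mx (0 : 'rV[F]_m) c) <= wgt c)%N.
Proof.
rewrite /wgt; apply: (leq_trans _ (leq_imset_card (@rshift m n) _)).
apply: subset_leq_card; apply/subsetP => i; rewrite inE.
case: (splitP i) => j ij.
  have -> : i = lshift n j by apply/val_inj.
  by rewrite row_mxEl mxE eqxx.
have -> : i = rshift m j by apply/val_inj.
by rewrite row_mxEr => nz; apply: imset_f; rewrite inE.
Qed.

Lemma ker_idem (F : finFieldType) l (A E Fm : 'M[F]_l) (y : 'rV[F]_l) :
  assoc_idem A E Fm -> y *m A^T = 0 -> y = y *m (1%:M - Fm)^T.
Proof.
case=> [[_ _ _ rF] [_ AF]] yA.
have sAF : (A <= Fm)%MS by rewrite -{1}AF submxMl.
have sFA : (Fm <= A)%MS.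
  by have := mxrank_leqif_sup sAF; case=> _ <-; rewrite rF.
case/submxP: sFA => D FD.
by rewrite linearB /= trmx1 mulmxBr mulmx1 FD trmx_mul mulmxA yA mul0mx subr0.
Qed.

Unset Implicit Arguments. Set Strict Implicit.

Theorem mainTheorem4 (F : finFieldType) (l : nat) (A B EA FA EB FB : 'M[F]_l) :
  A *m B = B *m A ->
  assoc_idem A EA FA ->
  assoc_idem B EB FB ->
  let HX := row_mx A B in
  let HZ := row_mx B^T (- A^T) in
  let HXL := block_mx A B 0 (1%:M - EA) in
  let HXR := block_mx A B (1%:M - EB) 0 in
  let HZL := (B *m (1%:M - FA))^T in
  let HZR := (A *m (1%:M - FB))^T in
  (ele (dZ HX HZ) (dZ HXL HZ) /\ ele (dZ HXL HZ) (dZ A HZL)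
     /\ ele (dZ A HZL) (dcode (col_mx A EB)))
  /\
  (ele (dZ HX HZ) (dZ HXR HZ) /\ ele (dZ HXR HZ) (dZ B HZR)
     /\ ele (dZ B HZR) (dcode (col_mx B EA))).
Proof.
intros AB iA iB; cbv zeta.
have EAA : EA *m A = A by case: iA => _ [].
have EBB : EB *m B = B by case: iB => _ [].
split; split; [|split| |split].
- apply: (@min_wgt_map _ _ _ _ _ id) => c /andP[pc nc]; split => //.
  rewrite nc andbT; move: pc.
  by rewrite /in_perp /block_mx mul_col_mx col_mx_eq0 => /andP[].
- apply: (@min_wgt_map _ _ _ _ _ (fun c => row_mx c (0 : 'rV_l))) => c /andP[pc nc].
  split; last exact: wgt_row_l.
  apply/andP; split.
    by rewrite /in_perp tr_row_mx mul_block_col (eqP pc) trmx0 !mulmx0 mul0mx !addr0 col_mx0.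
  apply/negP => /submxP[y]; rewrite mul_mx_row => /eq_row_mx[cE zE].
  apply/negP: nc.
  have yA : y *m A^T = 0 by apply/eqP; rewrite -oppr_eq0 -mulmxN -zE.
  by rewrite cE (ker_idem iA yA) -mulmxA -trmx_mul submxMl.
- apply: (@min_wgt_map _ _ _ _ _ id) => c /andP[pc nc]; split => //.
  move: pc; rewrite /in_perp mul_col_mx col_mx_eq0 => /andP[-> /eqP ec] /=.
  apply/negP => /submxP[z cE]; apply/negP: nc; apply/eqP.
  have : c *m EB^T = c by rewrite cE -mulmxA -trmx_mul mulmxA EBB.
  have -> : c *m EB^T = (EB *m c^T)^T by rewrite trmx_mul trmxK.
  by rewrite ec trmx0 => <-; rewrite eqxx.
- apply: (@min_wgt_map _ _ _ _ _ id) => c /andP[pc nc]; split => //.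
  rewrite nc andbT; move: pc.
  by rewrite /in_perp /block_mx mul_col_mx col_mx_eq0 => /andP[].
- apply: (@min_wgt_map _ _ _ _ _ (fun c => row_mx (0 : 'rV_l) c)) => c /andP[pc nc].
  split; last exact: wgt_row_r.
  apply/andP; split.
    by rewrite /in_perp tr_row_mx mul_block_col (eqP pc) trmx0 !mulmx0 mul0mx !add0r col_mx0.
  apply/negP => /submxP[y]; rewrite mul_mx_row => /eq_row_mx[cE zE].
  apply/negP: nc.
  have yB : y *m B^T = 0 by rewrite -cE.
  by rewrite zE (ker_idem iB yB) mulmxN -mulmxA -trmx_mul eqmx_opp submxMl.
- apply: (@min_wgt_map _ _ _ _ _ id) => c /andP[pc nc]; split => //.
  move: pc; rewrite /in_perp mul_col_mx col_mx_eq0 => /andP[-> /eqP ec] /=.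
  apply/negP => /submxP[z cE]; apply/negP: nc; apply/eqP.
  have : c *m EA^T = c by rewrite cE -mulmxA -trmx_mul mulmxA EAA.
  have -> : c *m EA^T = (EA *m c^T)^T by rewrite trmx_mul trmxK.
  by rewrite ec trmx0 => <-; rewrite eqxx.
Qed.
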